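(* Let $A$ be a finite set with $|A|\ge 2$, $n\ge 2$, and let $\mathcal{I}\subseteq\mathrm{Sym}(A^n)$ be the set of instructions. Then the set of permutations $f\in\mathrm{Sym}(A^n)$ such that $f^{-1}gf\in\mathcal{I}$ for every $g\in\mathcal{I}$ is exactly the group $U$ of unary permutations of $A^n$, which equals $\mathrm{Sym}(A)\wr\mathrm{Sym}(n)$. In other words, $U$ is the largest subgroup of $\mathrm{Sym}(A^n)$ acting on $\mathcal{I}$ by conjugation.
   Context: Any $f\in\mathrm{Sym}(A^n)$ is written $f(x)=(f_1(x),\ldots,f_n(x))$ with coordinate functions $f_i:A^n\to A$; the $i$-th coordinate function is trivial if $f_i(x)=x_i$ for all $x$. An instruction is a permutation of $A^n$ with at most one nontrivial coordinate function (the identity counts as an instruction). A permutation $f$ of $A^n$ is unary if each coordinate function $f_i$ depends on at most one variable. The wreath product $\mathrm{Sym}(A)\wr\mathrm{Sym}(n)$ acts on $A^n$ by permuting coordinates and applying permutations of $A$ independently in each coordinate. *)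

(* Defs.v *)
From mathcomp Require Import all_boot all_fingroup.
Set Implicit Arguments. Unset Strict Implicit. Unset Printing Implicit Defensive.
Local Open Scope group_scope.

Definition cube (A : finType) (n : nat) : finType := {ffun 'I_n -> A}.

Definition trivial_coord (A : finType) (n : nat) (f : {perm cube A n}) (i : 'I_n) : Prop :=
  forall x : cube A n, f x i = x i.

Definition instruction (A : finType) (n : nat) (f : {perm cube A n}) : Prop :=
  exists i : 'I_n, forall j : 'I_n, j != i -> trivial_coord f j.

Definition depends_on_at_most_one (A : finType) (n : nat) (h : cube A n -> A) : Prop :=
  exists j : 'I_n, forall x y : cube A n, x j = y j -> h x = h y.

Definition unary (A : finType) (n : nat) (f : {perm cube A n}) : Prop :=
  forall i : 'I_n, depends_on_at_most_one (fun x => f x i).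

(* f lies in (the image of) Sym(A) wr Sym(n) acting on A^n:
   f(x)_i = s_i (x_{pi i}) *)
Definition in_wreath (A : finType) (n : nat) (f : {perm cube A n}) : Prop :=
  exists (pi : 'S_n) (s : 'I_n -> {perm A}),
    forall (x : cube A n) (i : 'I_n), f x i = s i (x (pi i)).

Definition normalizes_instructions (A : finType) (n : nat) (f : {perm cube A n}) : Prop :=
  forall g : {perm cube A n}, instruction g -> instruction (f^-1 * g * f).

(* Main.v *)
Require Import Defs.
From mathcomp Require Import all_boot all_fingroup.
Set Implicit Arguments. Unset Strict Implicit. Unset Printing Implicit Defensive.
Local Open Scope group_scope.

Lemma surj_inj (T : finType) (s : T -> T) :
  (forall k, k \in codom s) -> injective s.
Proof.
move=> H.
pose g k := iinv (H k).
have gK : cancel g s by move=> k; rewrite /g f_iinv.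
have [g' gg' g'g] := injF_bij (can_inj gK).
have E : forall i, s i = g' i.
  by move=> i; rewrite -{1}(g'g i) gK.
by move=> x y; rewrite !E => /(can_inj g'g).
Qed.

Definition upd (A : finType) (n : nat) (x : cube A n) (i : 'I_n) (b : A) : cube A n :=
  [ffun j => if j == i then b else x j].

Definition inG (A : finType) (n : nat) (f : {perm cube A n}) (i : 'I_n) : Prop :=
  forall j, j != i -> trivial_coord f j.

Lemma inG1 (A : finType) (n : nat) (f : {perm cube A n}) :
  (forall j, trivial_coord f j) -> f = 1.
Proof. by move=> H; apply/permP => x; apply/ffunP => j; rewrite perm1 H. Qed.

Lemma inGM (A : finType) (n : nat) (a b : {perm cube A n}) i :
  inG a i -> inG b i -> inG (a * b) i.
Proof. by move=> Ha Hb j ji x; rewrite permM Hb // Ha. Qed.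

Lemma inGL (A : finType) (n : nat) (a b : {perm cube A n}) j k m :
  j != k -> inG a j -> inG b k -> inG (a * b) m -> a = 1 \/ b = 1.
Proof.
move=> jk Ha Hb Hab.
have kj : k != j by rewrite eq_sym.
case: (eqVneq m j) => [mj|mj].
- right; apply: inG1 => l x.
  case: (eqVneq l k) => [->|lk]; last by apply: Hb.
  have km : k != m by rewrite mj.
  have := Hab k km (a^-1 x); rewrite permM permKV => ->.
  have := Ha k kj (a^-1 x); rewrite permKV => ->; done.
- left; apply: inG1 => l x.
  case: (eqVneq l j) => [->|lj]; last by apply: Ha.
  have jm : j != m by rewrite eq_sym.
  have := Hab j jm x; rewrite permM Hb //.
Qed.

Lemma tperm_inG (A : finType) (n : nat) (u v : cube A n) m :
  inG (tperm u v) m -> forall l, l != m -> v l = u l.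
Proof. by move=> H l lm; rewrite -{1}(tpermL u v); apply: H. Qed.

Lemma upd_inG (A : finType) (n : nat) (x : cube A n) i b :
  inG (tperm x (upd x i b)) i.
Proof.
by move=> j ji z; case: tpermP => [->|->|_ _]; rewrite ?ffunE ?(negbTE ji).
Qed.

Lemma conjE (A : finType) (n : nat) (f g : {perm cube A n}) :
  f^-1 * g * f = g ^ f.
Proof. by rewrite /conjg mulgA. Qed.

Lemma instr_inG (A : finType) (n : nat) (g : {perm cube A n}) :
  instruction g <-> exists i, inG g i.
Proof. by []. Qed.

Lemma walk (A : finType) (n : nat) (T : Type) (h : cube A n -> T) (P : pred 'I_n) :
  (forall x i b, P i -> h (upd x i b) = h x) ->
  forall x y : cube A n, (forall i, ~~ P i -> x i = y i) -> h x = h y.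
Proof.
move=> H x y Exy.
pose z m : cube A n := [ffun l : 'I_n => if (l < m)%N then y l else x l].
have zS : forall m, h (z m) = h x.
  elim=> [|m IH].
  - by congr h; apply/ffunP => l; rewrite ffunE.
  - case: (ltnP m n) => mn.
    + pose o := Ordinal mn.
      case Po: (P o).
      * rewrite -IH -(H (z m) o (y o) Po); congr h; apply/ffunP => l; rewrite !ffunE.
        rewrite ltnS leq_eqVlt; case: (eqVneq l o) => [->|lo] /=; first by rewrite eqxx.
        have -> : (nat_of_ord l == m) = false.
          by apply/negbTE; move: lo; apply: contra => /eqP e; apply/eqP/val_inj.
        by [].
      * rewrite -IH; congr h; apply/ffunP=> l; rewrite !ffunE ltnS leq_eqVlt.
        case: (eqVneq (nat_of_ord l) m) => [e|ne] /=; last by [].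
        have lo : l = o by apply: val_inj.
        by rewrite e ltnn lo Exy ?Po.
    + rewrite -IH; congr h; apply/ffunP=> l; rewrite !ffunE.
      have lm : (l < m)%N by apply: leq_trans (ltn_ord l) mn.
      by rewrite lm ltnS (ltnW lm).
have := zS n.
have -> : z n = y by apply/ffunP => l; rewrite ffunE ltn_ord.
by [].
Qed.

Lemma two (A : finType) : 1 < #|A| -> forall a : A, exists b, b != a.
Proof.
move/card_gt1P=> [a0 [a1 [_ _ ne]]] a.
case: (eqVneq a a0) => [->|h]; first by exists a1; rewrite eq_sym.
by exists a0; rewrite eq_sym.
Qed.

Lemma upd_same (A : finType) (n : nat) (x : cube A n) i : upd x i (x i) = x.
Proof. by apply/ffunP => j; rewrite ffunE; case: eqP => [->|]. Qed.

Lemma upd_neq (A : finType) (n : nat) (x : cube A n) i b : b != x i -> upd x i b != x.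
Proof. by move=> bx; apply: contraNneq bx => <-; rewrite ffunE eqxx. Qed.

Lemma tperm_neq1 (T : finType) (u v : T) : u != v -> tperm u v != 1.
Proof.
move=> uv; apply/eqP => e; have := tpermL u v; rewrite e perm1 => /eqP.
by rewrite (negbTE uv).
Qed.

Lemma key (A : finType) (n : nat) (f : {perm cube A n}) :
  1 < #|A| -> normalizes_instructions f ->
  forall i, exists k, forall x b l, l != k -> f (upd x i b) l = f x l.
Proof.
move=> hA Hf i.
have /card_gt1P [a0 [a1 [_ _ a01]]] := hA.
pose x0 : cube A n := [ffun=> a0].
pose g0 := tperm x0 (upd x0 i a1).
have : instruction g0 by exists i; apply: upd_inG.
move/Hf => [k Hk].
rewrite conjE tpermJ in Hk.
exists k => x b l lk.
case: (eqVneq b (x i)) => [->|bx]; first by rewrite upd_same.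
pose g := tperm x (upd x i b).
have : instruction g by exists i; apply: upd_inG.
move/Hf => [m Hm].
rewrite conjE tpermJ in Hm.
have : instruction (g0 * g) by exists i; apply: inGM; apply: upd_inG.
move/Hf => [p Hp].
rewrite conjE conjMg !tpermJ in Hp.
case: (eqVneq k m) => [km|km].
  by rewrite km in lk; apply: (tperm_inG Hm).
have ne0 : f x0 != f (upd x0 i a1).
  by rewrite (inj_eq perm_inj) eq_sym; apply: upd_neq; rewrite ffunE eq_sym.
have ne : f x != f (upd x i b).
  by rewrite (inj_eq perm_inj) eq_sym; apply: upd_neq.
by case: (inGL km Hk Hm Hp) => /eqP; rewrite ?(negbTE (tperm_neq1 ne0)) ?(negbTE (tperm_neq1 ne)).
Qed.

Lemma NU (A : finType) (n : nat) (f : {perm cube A n}) :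
  1 < #|A| -> normalizes_instructions f -> unary f.
Proof.
move=> hA Hf.
pose D i k := [forall x, forall b, forall l, (l != k) ==> (f (upd x i b) l == f x l)].
have DP : forall i k, reflect (forall x b l, l != k -> f (upd x i b) l = f x l) (D i k).
  move=> i k; apply: (iffP forallP) => [H x b l lk | H x].
    by move: (H x) => /forallP/(_ b)/forallP/(_ l); rewrite lk /= => /eqP.
  by apply/forallP => b; apply/forallP => l; apply/implyP => lk; apply/eqP; apply: H.
pose s i := odflt i [pick k | D i k].
have sD : forall i, D i (s i).
  move=> i; rewrite /s; case: pickP => [k //|/= none].
  have [k Hk] := key hA Hf i.
  by move: (none k); rewrite (introT (DP i k) Hk).
have ssurj : forall k, k \in codom s.
  move=> k; apply/negPn/negP => nk.
  have Hc : forall x i b, predT i -> (fun x => f x k) (upd x i b) = (fun x => f x k) x.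
    move=> x i b _ /=; apply: (DP i (s i) (sD i)).
    by apply/eqP => e; move: nk; rewrite e codom_f.
  have /card_gt1P [a0 [_ [_ _ _]]] := hA.
  pose x0 : cube A n := [ffun=> a0].
  have [b hb] := two hA (f x0 k).
  pose y := upd (f x0) k b.
  have := walk (x := x0) (y := f^-1 y) Hc (fun i (hi : ~~ predT i) => False_ind _ (notF hi)).
  by rewrite /= permKV ffunE eqxx => e; move: hb; rewrite e eqxx.
have sinj := surj_inj ssurj.
move=> k; have /codomP [j ->] := ssurj k.
exists j => x y Exy.
apply: (walk (P := fun i => i != j) (h := fun x => f x (s j))).
  move=> z i b ij /=; apply: (DP i (s i) (sD i)).
  by rewrite (inj_eq sinj) eq_sym.
by move=> i /negPn/eqP ->.
Qed.

Lemma WN (A : finType) (n : nat) (f : {perm cube A n}) :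
  in_wreath f -> normalizes_instructions f.
Proof.
move=> [pi [s Hf]] g [i Hg].
exists (pi^-1 i) => k ki y.
rewrite !permM.
have pki : pi k != i by apply: contraNneq ki => <-; rewrite permK.
by rewrite Hf (Hg (pi k) pki) -Hf permKV.
Qed.

Lemma WU (A : finType) (n : nat) (f : {perm cube A n}) :
  in_wreath f -> unary f.
Proof. by move=> [pi [s Hf]] i; exists (pi i) => x y e; rewrite !Hf e. Qed.

Lemma UW (A : finType) (n : nat) (f : {perm cube A n}) :
  1 < #|A| -> unary f -> in_wreath f.
Proof.
move=> hA Hu.
pose dep (i j : 'I_n) := [forall x : cube A n, forall y : cube A n, (x j == y j) ==> (f x i == f y i)].
have depP : forall i j, reflect (forall x y : cube A n, x j = y j -> f x i = f y i) (dep i j).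
  move=> i j; apply: (iffP forallP) => [H x y e | H x].
    by move: (H x) => /forallP/(_ y); rewrite e eqxx /= => /eqP.
  by apply/forallP => y; apply/implyP => /eqP e; apply/eqP; apply: H.
pose p i := odflt i [pick j | dep i j].
have pD : forall i, dep i (p i).
  move=> i; rewrite /p; case: pickP => [k //|/= none].
  have [k Hk] := Hu i.
  by move: (none k); rewrite (introT (depP i k) Hk).
have Hd : forall i (x y : cube A n), x (p i) = y (p i) -> f x i = f y i.
  by move=> i; apply/depP/pD.
have psurj : forall j, j \in codom p.
  move=> j; apply/negPn/negP => nj.
  have /card_gt1P [a0 [_ [_ _ _]]] := hA.
  pose x0 : cube A n := [ffun=> a0].
  have [b hb] := two hA (x0 j).
  have : f (upd x0 j b) = f x0.
    apply/ffunP => i; apply: Hd; rewrite ffunE; case: eqP => [e|_] //.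
    by move: nj; rewrite -e codom_f.
  by move/perm_inj/eqP; rewrite (negbTE (upd_neq hb)).
have pinj := surj_inj psurj.
pose h i (a : A) := f ([ffun=> a] : cube A n) i.
have fh : forall x i, f x i = h i (x (p i)) by move=> x i; apply: Hd; rewrite ffunE.
have hinj : forall i, injective (h i).
  move=> i a a' e.
  case: (eqVneq a' a) => // ne.
  pose x : cube A n := [ffun=> a].
  have : f (upd x (p i) a') = f x.
    apply/ffunP => l; rewrite !fh !ffunE.
    case: (eqVneq l i) => [->|li]; first by rewrite eqxx e.
    by rewrite (inj_eq pinj) (negbTE li).
  move/perm_inj/eqP; rewrite (negbTE (upd_neq _)) //.
  by rewrite ffunE.
by exists (perm pinj), (fun i => perm (hinj i)) => x i; rewrite !permE fh.
Qed.
Local Close Scope group_scope.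
Unset Implicit Arguments.

Theorem proposition1 (A : finType) (n : nat) :
  1 < #|A| -> 1 < n ->
  (forall f : {perm cube A n}, normalizes_instructions f <-> unary f) /\
  (forall f : {perm cube A n}, unary f <-> in_wreath f).
Proof.
move=> hA _; split => f; split.
- exact: NU.
- by move=> Hu; apply: WN; apply: UW.
- exact: UW.
- exact: WU.
Qed.
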